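(* Let $(\mathcal{P},\Sigma)$ be a measurable space, let $\mathbb{P}^+,\mathbb{P}^-$ be mutually singular probability measures on it, let $\beta\in(0,1)$ and $\mathbb{P}_m=\beta\mathbb{P}^++(1-\beta)\mathbb{P}^-$, and fix $a>0$, $\gamma\in(0,1]$. For a measurable $D:\mathcal{P}\to[0,+\infty)$ and a probability measure $\mathbb{Q}$ on $\mathcal{P}$ (the generated patch-feature distribution $\mathbb{P}_g^{(h,w)}$), define $$L_D(D,\mathbb{Q})=\gamma\,\mathbb{E}_{p\sim\mathbb{Q}}\max(0,a-D(p))+(1-\gamma)\,\mathbb{E}_{p\sim\mathbb{P}_m}\max(0,a-D(p))+\mathbb{E}_{p\sim\mathbb{P}^+}D(p),$$ $$L_G(D,\mathbb{Q})=\gamma\,\mathbb{E}_{p\sim\mathbb{Q}}D(p)+(1-\gamma)\,\mathbb{E}_{p\sim\mathbb{P}_m}D(p)-\mathbb{E}_{p\sim\mathbb{P}^+}D(p).$$ Then there is a Nash equilibrium $(D^*,\mathbb{Q}^* )$ with $\mathbb{Q}^*=\mathbb{P}^+$: there exists a measurable $D^*:\mathcal{P}\to[0,a]$ such that (i) $L_D(D^*,\mathbb{P}^+)\le L_D(D,\mathbb{P}^+)$ for every measurable $D:\mathcal{P}\to[0,+\infty)$, and (ii) $L_G(D^*,\mathbb{P}^+)\le L_G(D^*,\mathbb{Q})$ for every probability measure $\mathbb{Q}$ on $\mathcal{P}$.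
   Context: $\mathbb{P}^+$ and $\mathbb{P}^-$ model the distributions of normal and anomalous patch features; $\mathbb{P}_m$ is the (known) distribution of patch features from anomalous images, which mixes normal and anomalous patches with unknown ratio $\beta$. The generator at a fixed patch position is identified with its output distribution $\mathbb{Q}$, which may be any probability measure on $\mathcal{P}$. ''Mutually singular'' means there is a measurable set $S$ with $\mathbb{P}^+(S)=1$ and $\mathbb{P}^-(S)=0$. The discriminator minimizes $L_D$ and the generator minimizes $L_G$. *)

(* Defs.v *)
From HB Require Import structures.
From mathcomp Require Import all_boot all_order all_algebra.
From mathcomp Require Import all_classical all_reals all_analysis.
Set Implicit Arguments. Unset Strict Implicit. Unset Printing Implicit Defensive.
Import Order.TTheory GRing.Theory Num.Theory.
Local Open Scope classical_set_scope.
Local Open Scope ring_scope.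
Local Open Scope ereal_scope.

Definition mutually_singular d (T : measurableType d) (R : realType)
  (mu nu : probability T R) : Prop :=
  exists S : set T, [/\ measurable S, mu S = 1 & nu S = 0].

Definition loss_D d (T : measurableType d) (R : realType)
  (gamma a : R) (Pm Pplus : probability T R) (D : T -> R) (Q : probability T R)
  : \bar R :=
  (gamma%:E * \int[Q]_x (Num.max 0 (a - D x))%:E)
  + ((1 - gamma)%:E * \int[Pm]_x (Num.max 0 (a - D x))%:E)
  + \int[Pplus]_x (D x)%:E.

Definition loss_G d (T : measurableType d) (R : realType)
  (gamma : R) (Pm Pplus : probability T R) (D : T -> R) (Q : probability T R)
  : \bar R :=
  (gamma%:E * \int[Q]_x (D x)%:E)
  + ((1 - gamma)%:E * \int[Pm]_x (D x)%:E)
  - \int[Pplus]_x (D x)%:E.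

(* Main.v *)
Require Import Defs.
From HB Require Import structures.
From mathcomp Require Import all_boot all_order all_algebra.
From mathcomp Require Import all_classical all_reals all_analysis.
From mathcomp Require Import measurable_realfun ring lra.
Import Order.TTheory GRing.Theory Num.Theory.
Local Open Scope classical_set_scope.
Local Open Scope ring_scope.

Lemma intInd d (T : measurableType d) (R : realType) (mu : probability T R)
  (a : R) (A : set T) : measurable A -> 0 <= a ->
  (\int[mu]_x (a * \1_A x)%:E = a%:E * mu A)%E.
Proof.
move=> mA a0.
under eq_integral => x _ do rewrite EFinM.
have mi : measurable_fun [set: T] (fun x : T => ((\1_A x)%:E : \bar R)).
  apply/measurable_EFinP; exact: measurable_indic.
rewrite (ge0_integralZl _ _ mi) ?lee_fin //.
  by rewrite integral_indic// setIT.
Qed.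

Lemma fbound d (T : measurableType d) (R : realType) (mu : probability T R)
  (a : R) (D : T -> R) : 0 <= a -> measurable_fun setT D -> (forall x, 0 <= D x) ->
  exists m : R, [/\ (\int[mu]_x (Num.max 0 (a - D x))%:E = m%:E)%E, 0 <= m & m <= a].
Proof.
move=> a0 mD D0.
have h0 : (0 <= \int[mu]_x (Num.max 0 (a - D x))%:E)%E.
  by apply: integral_ge0 => x _; rewrite lee_fin le_max lexx.
have h1 : (\int[mu]_x (Num.max 0 (a - D x))%:E <= a%:E)%E.
  apply: (@le_trans _ _ (\int[mu]_x (cst a%:E) x)%E).
    apply: (@ge0_le_integral _ _ _ mu setT measurableT).
    - by move=> x _; rewrite lee_fin le_max lexx.
    - apply/measurable_EFinP; apply: measurable_maxr => //.
      by apply: measurable_funB.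
    - by [].
    - by move=> x _; rewrite lee_fin ge_max a0 /= lerBlDr lerDl D0.
  rewrite integral_cst // [X in (_ * X)%E](_ : _ = 1%E) ?mule1 //; exact: probability_setT.
move: h0 h1; case: (\int[mu]_x _)%E => [m| |] //= h0 h1.
by exists m; split => //; rewrite -lee_fin.
Qed.

Theorem theorem2 (d : measure_display) (T : measurableType d) (R : realType)
  (Pplus Pminus Pm : probability T R) (beta a gamma : R) :
  mutually_singular Pplus Pminus ->
  0 < beta < 1 ->
  (forall A : set T, measurable A ->
     Pm A = (beta%:E * Pplus A + (1 - beta)%:E * Pminus A)%E) ->
  0 < a -> 0 < gamma <= 1 ->
  exists Dstar : T -> R,
    [/\ measurable_fun setT Dstar,
        (forall x, 0 <= Dstar x <= a),
        (forall D : T -> R, measurable_fun setT D -> (forall x, 0 <= D x) ->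
           (loss_D gamma a Pm Pplus Dstar Pplus
              <= loss_D gamma a Pm Pplus D Pplus)%E) &
        (forall Q : probability T R,
           (loss_G gamma Pm Pplus Dstar Pplus
              <= loss_G gamma Pm Pplus Dstar Q)%E)].
Proof.
move=> [S [mS PS1 PmS0]] /andP[b0 b1] hPm a0 /andP[g0 g1].
pose Ds := fun x : T => a * \1_(~` S) x.
have mDs : measurable_fun setT Ds.
  by apply: measurable_funM => //; apply: measurable_indic; exact: measurableC.
have fS : forall x, Num.max 0 (a - Ds x) = a * \1_S x.
  move=> x; rewrite /Ds !indicE in_setC.
  by case: (x \in S) => /=; rewrite ?mulr0 ?subr0 ?mulr1 ?subrr ?maxxx // max_r // ltW.
have PmS : Pm S = beta%:E.
  by rewrite hPm // PS1 PmS0 !mule0 mule1 adde0.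
have EDs : (\int[Pplus]_x (Ds x)%:E = 0)%E.
  by rewrite intInd ?ltW //; [rewrite probability_setC // PS1 subee // mule0 | exact: measurableC].
have NDs : (\int[Pm]_x (Ds x)%:E = a%:E * (1 - beta)%:E)%E.
  rewrite intInd ?ltW //; last exact: measurableC.
  by rewrite probability_setC // PmS.
have Ds0 : forall x, 0 <= Ds x.
  by move=> x; rewrite /Ds indicE; case: (x \in _) => /=; rewrite ?mulr1 ?mulr0 ?lexx ?ltW.
exists Ds; split => //.
- by move=> x; rewrite /Ds indicE; case: (x \in _) => /=; rewrite ?mulr1 ?mulr0 lexx ?ltW.
- move=> D mD D0; rewrite /loss_D.
  have fSf : (fun x => (Num.max 0 (a - Ds x))%:E) = (fun x => (a * \1_S x)%:E :> \bar R).
    by apply: funext => x; rewrite fS.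
  rewrite !fSf.
  have a0w := ltW a0.
  rewrite EDs !intInd // PS1 PmS adde0 mule1.
  have mf : measurable_fun setT (fun x => Num.max 0 (a - D x)).
    apply: measurable_maxr => //; apply: measurable_funB => //.
  have [m [hm m0 ma]] := @fbound _ _ _ Pplus _ _ (ltW a0) mD D0.
  have [n [hn n0 na]] := @fbound _ _ _ Pm _ _ (ltW a0) mD D0.
  rewrite hm hn.
  have hME : (a%:E <= m%:E + \int[Pplus]_x (D x)%:E)%E.
    rewrite -hm -ge0_integralD //; last 4 first.
    - by move=> x _; rewrite lee_fin le_max lexx.
    - by apply/measurable_EFinP.
    - by move=> x _; rewrite lee_fin.
    - by apply/measurable_EFinP.
    apply: (@le_trans _ _ (\int[Pplus]_x (cst a%:E) x)%E).
      rewrite integral_cst // [X in (_ * X)%E](_ : _ = 1%E) ?mule1 //; exact: probability_setT.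
    apply: (@ge0_le_integral _ _ _ Pplus setT measurableT).
    - by move=> x _; rewrite lee_fin ltW.
    - by [].
    - by apply: emeasurable_funD; apply/measurable_EFinP.
    - move=> x _; rewrite -EFinD lee_fin.
      have h : a - D x <= Num.max 0 (a - D x) by rewrite le_max lexx orbT.
      lra.
  have hN : (beta%:E * m%:E <= n%:E)%E.
    pose m1 := mscale (NngNum (ltW b0)) Pplus.
    have b1' : 0 <= 1 - beta by rewrite subr_ge0 ltW.
    pose m2 := mscale (NngNum b1') Pminus.
    rewrite -hm -hn (eq_measure_integral (measure_add m1 m2) (m1:=Pm)); last first.
      by move=> A mA _; exact: (etrans (hPm A mA) (esym (measure_addE m1 m2 A))).
    rewrite ge0_integral_measure_add //; last 2 first.
    - by move=> x _; rewrite lee_fin le_max lexx.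
    - by apply/measurable_EFinP.
    rewrite /m1 /m2 !ge0_integral_mscale //=.
    - rewrite leeDl // mule_ge0 // ?lee_fin //.
      by apply: integral_ge0 => x _; rewrite lee_fin le_max lexx.
    - by apply/measurable_EFinP.
    - by move=> x _; rewrite lee_fin le_max lexx.
    - by apply/measurable_EFinP.
    - by move=> x _; rewrite lee_fin le_max lexx.
  move: hME; case E: (\int[Pplus]_x (D x)%:E)%E => [e| |] hME.
    rewrite -!EFinM -!EFinD lee_fin.
    move: hME hN; rewrite -!EFinM -!EFinD !lee_fin => hME hN.
    have e0 : 0 <= e.
      by rewrite -lee_fin -E; apply: integral_ge0 => x _; rewrite lee_fin.
    have c1 : gamma + (1 - gamma) * beta <= 1 by nra.
    nra.
  + by rewrite -!EFinM -!EFinD addey // leey.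
  + by [].
- move=> Q; rewrite /loss_G EDs mule0 add0e.
  apply: leeD2r; rewrite -[X in (X <= _)%E]add0e; apply: leeD2r.
  apply: mule_ge0; first by rewrite lee_fin ltW.
  by apply: integral_ge0 => x _; rewrite lee_fin Ds0.
Qed.
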